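(* Let $a,b,\lambda,N\in\mathbb N$ and $$M_N(a,b,\lambda)=\int_{[-1/2,1/2]^N}\prod_{l=1}^N e^{\pi i\theta_l(a-b)}\bigl|1+e^{2\pi i\theta_l}\bigr|^{a+b}\prod_{1\le k<l\le N}\bigl|e^{2\pi i\theta_k}-e^{2\pi i\theta_l}\bigr|^{2\lambda}\,d\theta.$$ Then $$M_N(a,b,\lambda)=\sum_{\substack{I_{kl}=-\lambda\\ 1\le k<l\le N}}^{\lambda}(-1)^{\sum_{k<l}I_{kl}}\prod_{1\le k<l\le N}\binom{2\lambda}{\lambda+I_{kl}}\prod_{k=1}^N\binom{a+b}{a+\sum_{l\ne k}I_{kl}}.$$
   Context: The sum runs over all families of integers $I_{kl}\in\{-\lambda,\dots,\lambda\}$, one for each pair $1\le k<l\le N$, with the convention $I_{kl}:=-I_{lk}$ for $k>l$. Binomial coefficients $\binom{r}{j}$ with $j<0$ or $j>r$ are zero. *)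

(* Defs.v *)
From Stdlib Require Import Reals.
From Coquelicot Require Import Coquelicot.
From mathcomp Require Import all_boot all_algebra.

Set Implicit Arguments.
Unset Strict Implicit.
Unset Printing Implicit Defensive.

Definition cis (x : R) : C := (cos x, sin x).

Definition Cprod (s : list nat) (f : nat -> C) : C :=
  List.fold_right (fun i acc => Cmult (f i) acc) (RtoC 1) s.

(* The integrand, with variables theta_1..theta_N stored as th 0 .. th (N-1):
   prod_l e^{pi i theta_l (a-b)} |1+e^{2 pi i theta_l}|^{a+b}
   * prod_{k<l} |e^{2 pi i theta_k} - e^{2 pi i theta_l}|^{2 lambda}. *)
Definition integrand (N a b lam : nat) (th : nat -> R) : C :=
  Cmult
    (Cprod (iota 0 N) (fun l =>
       Cmult (cis (Rmult (Rmult PI (th l)) (Rminus (INR a) (INR b))))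
             (RtoC (pow (Cmod (Cplus (RtoC 1) (cis (Rmult (Rmult 2 PI) (th l))))) (a + b)))))
    (Cprod (iota 0 N) (fun k =>
       Cprod (iota k.+1 (N - k.+1)) (fun l =>
         RtoC (pow (Cmod (Cminus (cis (Rmult (Rmult 2 PI) (th k)))
                                 (cis (Rmult (Rmult 2 PI) (th l))))) (2 * lam))))).

(* Iterated integral over [-1/2,1/2]^n of a real function of the
   coordinates th 0, ..., th (n-1) (Fubini: for continuous integrands this is
   the integral over the cube).  Coordinate m is the outermost at level m+1. *)
Fixpoint iint (n : nat) (f : (nat -> R) -> R) : R :=
  match n with
  | O => f (fun _ => R0)
  | S m => RInt (fun t => iint m (fun x => f (fun i => if Nat.eqb i m then t else x i)))
                (Ropp (Rdiv 1 2)) (Rdiv 1 2)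
  end.

Definition MN (N a b lam : nat) : C :=
  (iint N (fun th => Re (integrand N a b lam th)),
   iint N (fun th => Im (integrand N a b lam th))).

Import GRing.Theory Num.Theory.
Local Open Scope ring_scope.

Definition pairs (N : nat) := {p : 'I_N * 'I_N | (p.1 < p.2)%N}.

(* A family (I_kl)_{k<l} with values in {-lam..lam} is encoded by
   f : pairs N -> 'I_(2 lam + 1), via I_kl = f(k,l) - lam. *)
Definition family (N lam : nat) := {ffun pairs N -> 'I_(2 * lam + 1)}.

Definition Ipair (N lam : nat) (f : family N lam) (p : pairs N) : int :=
  (f p)%:Z - lam%:Z.

(* I_kl for arbitrary k,l, with the convention I_kl = - I_lk for k > l *)
Definition Ival (N lam : nat) (f : family N lam) (k l : 'I_N) : int :=
  if (insub (k, l) : option (pairs N)) is Some p then Ipair f p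
  else if (insub (l, k) : option (pairs N)) is Some p then - Ipair f p
  else 0.

(* binomial coefficient binom(r, j) for integer j, zero when j < 0 or j > r *)
Definition binZ (r : nat) (j : int) : int :=
  match j with
  | Posz n => ('C(r, n))%:Z
  | Negz _ => 0
  end.

Definition Msum (N a b lam : nat) : int :=
  \sum_(f : family N lam)
     ((-1) ^ (\sum_(p : pairs N) Ipair f p)
      * \prod_(p : pairs N) binZ (2 * lam) (lam%:Z + Ipair f p)
      * \prod_(k < N) binZ (a + b) (a%:Z + \sum_(l < N | l != k) Ival f k l)).

Definition int_to_R (z : int) : R :=
  match z with
  | Posz n => INR n
  | Negz n => Ropp (INR n.+1)
  end.

(* Main.v *)
Require Import Defs.
From HB Require Import structures.
From Stdlib Require Import Reals Lra FunctionalExtensionality.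
From Coquelicot Require Import Coquelicot.
From mathcomp Require Import all_boot all_algebra.
From mathcomp Require Import Rstruct zify ring.
Ltac mcring := ring.
Ltac mcfield := field.
From Stdlib Require Import Ring Field Lra.
Require Import Defs.
Set Implicit Arguments.
Unset Strict Implicit.
Unset Printing Implicit Defensive.
Import GRing.Theory.
Delimit Scope ring_scope with ring.
Delimit Scope R_scope with R.
Delimit Scope Z_scope with Z.



Definition CC : Type := C.
HB.instance Definition _ := Choice.copy CC (R * R)%type.

Fact CplusA : associative (Cplus : CC -> CC -> CC).
Proof. by move=> *; rewrite Cplus_assoc. Qed.
Fact Cplus_oppl (x : CC) : Cplus (Copp x) x = (RtoC 0).
Proof. by rewrite Cplus_comm Cplus_opp_r. Qed.
HB.instance Definition _ := GRing.isZmodule.Build CC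
  CplusA (Cplus_comm : commutative (Cplus : CC -> CC -> CC)) Cplus_0_l Cplus_oppl.
Fact CmultA : associative (Cmult : CC -> CC -> CC).
Proof. by move=> *; rewrite Cmult_assoc. Qed.
Fact C1_neq0 : (RtoC 1 : CC) != (RtoC 0 : CC).
Proof. by apply/eqP; apply C1_nz. Qed.
HB.instance Definition _ := GRing.Zmodule_isComNzRing.Build CC
  CmultA (Cmult_comm : commutative (Cmult : CC -> CC -> CC)) Cmult_1_l Cmult_plus_distr_r C1_neq0.
Fact CmulVf (x : CC) : x != (RtoC 0 : CC) -> Cmult (Cinv x) x = RtoC 1.
Proof. by move/eqP=> h; apply Cinv_l. Qed.
Fact Cinv0 : Cinv (RtoC 0 : CC) = RtoC 0.
Proof. rewrite /Cinv /= /Rdiv. apply injective_projections => /=; rewrite ?Rmult_0_l ?Rmult_0_r; lra. Qed.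
HB.instance Definition _ := GRing.ComNzRing_isField.Build CC CmulVf Cinv0.

Local Open Scope ring_scope.
Lemma addCE (x y : CC) : x + y = Cplus x y. Proof. by []. Qed.
Lemma mulCE (x y : CC) : x * y = Cmult x y. Proof. by []. Qed.
Lemma oppCE (x : CC) : - x = Copp x. Proof. by []. Qed.
Lemma oneCE : (1 : CC) = RtoC 1. Proof. by []. Qed.
Lemma zeroCE : (0 : CC) = RtoC 0. Proof. by []. Qed.
Lemma invCE (x : CC) : x^-1 = Cinv x. Proof. by []. Qed.
Goal forall x : CC, x * x^-1 = 1 -> True. by []. Qed.

Local Open Scope ring_scope.

Lemma cis_add x y : cis (Rplus x y) = (cis x : CC) * cis y.
Proof.
rewrite mulCE /cis /Cmult /= cos_plus sin_plus; apply injective_projections => /=; lra.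
Qed.
Lemma cis0 : cis R0 = 1 :> CC.
Proof. by rewrite /cis cos_0 sin_0. Qed.
Lemma cis_neq0 x : (cis x : CC) != 0.
Proof.
apply/eqP => h. have := cis_add x (Ropp x). rewrite h mul0r Rplus_opp_r cis0.
move=> h2; have := @oner_neq0 CC; by rewrite -h2 eqxx.
Qed.
Lemma cisN x : cis (Ropp x) = (cis x : CC)^-1.
Proof.
apply: (mulfI (cis_neq0 x)). by rewrite -cis_add Rplus_opp_r cis0 mulfV ?cis_neq0.
Qed.
Lemma cisn x (n : nat) : (cis x : CC) ^+ n = cis (Rmult (INR n) x).
Proof.
elim: n => [|n IH]; first by rewrite expr0 Rmult_0_l cis0.
by rewrite exprS IH -cis_add S_INR; congr cis; ring.
Qed.
Lemma cisz x (z : int) : (cis x : CC) ^ z = cis (Rmult (int_to_R z) x).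
Proof.
case: z => n /=; first by rewrite -exprnP cisn.
rewrite NegzE -exprnN cisn -cisN; congr cis; rewrite S_INR.
by case: n => [|n]; rewrite /= ?Rplus_0_l; ring.
Qed.

Lemma iint_ext n f g :
  (forall th, (forall i, (i < n)%N -> (- (1/2) < th i < 1/2)%R) -> f th = g th) ->
  iint n f = iint n g.
Proof.
elim: n f g => [|n IH] f g H /=; first by apply: H.
apply: RInt_ext => t; rewrite Rmin_left ?Rmax_right; try lra.
move=> Ht; apply: IH => th Hth; apply: H => i Hi.
destruct (Nat.eqb_spec i n) as [->|ne]; first lra.
apply: Hth; rewrite ltnS leq_eqVlt in Hi; case/orP: Hi => // /eqP; done.
Qed.

Definition mono n (e : nat -> int) (th : nat -> R) : CC :=
  \prod_(i < n) (cis (Rmult (Rmult 2 PI) (th i)) : CC)^(e i).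

Lemma int_to_R_IZR k : exists z, int_to_R k = IZR z.
Proof.
case: k => n /=; first by exists (Z.of_nat n); apply: INR_IZR_INZ.
by exists (- Z.of_nat n.+1)%Z; rewrite opp_IZR -INR_IZR_INZ.
Qed.

Lemma int_to_R_neq0 k : k != 0 -> int_to_R k <> R0.
Proof.
case: k => n h.
  change (INR n <> R0); apply: not_0_INR => h0; move: h; by rewrite h0.
change (Ropp (INR n.+1) <> R0).
have := pos_INR n; rewrite S_INR; lra.
Qed.

Lemma is_RInt_term (c : CC) (k : int) :
  is_RInt (fun s => Re ((c * (cis (Rmult (Rmult 2 PI) s) : CC)^k)%ring)) (- (1/2))%R (1/2)%R
    (if k == 0 then Re c else R0).
Proof.
have Hf : forall s, Re ((c * (cis (Rmult (Rmult 2 PI) s) : CC)^k)%ring) =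
   (Re c * cos (int_to_R k * (2 * PI * s)) - Im c * sin (int_to_R k * (2 * PI * s)))%R.
  by move=> s; rewrite cisz mulCE /cis /=.
case: eqP => [->|/eqP k0].
  apply: (is_RInt_ext (fun _ => Re c)).
    by move=> x _; rewrite expr0z mulr1.
  have := is_RInt_const (- (1/2))%R (1/2)%R (Re c).
  by rewrite /scal /= /mult /=; replace (1 / 2 - - (1 / 2))%R with 1%R by field; rewrite Rmult_1_l.
have K0 := int_to_R_neq0 k0.
set K := int_to_R k in K0 Hf *.
pose F s := ((Re c * sin (K * (2 * PI * s)) + Im c * cos (K * (2 * PI * s))) / (K * 2 * PI))%R.
have HP := PI_RGT_0.
have HI : is_RInt (fun s => Re ((c * (cis (Rmult (Rmult 2 PI) s) : CC)^k)%ring)) (- (1/2))%R (1/2)%R (minus (F (1/2)%R) (F (- (1/2))%R)).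
  apply: is_RInt_derive => x _.
  - rewrite Hf /F. auto_derive; first done. field; lra.
  - apply: (continuous_ext (fun s => (Re c * cos (K * (2 * PI * s)) - Im c * sin (K * (2 * PI * s)))%R)).
      by move=> s; rewrite Hf.
    apply: ex_derive_continuous; auto_derive; done.
suff E : minus (F (1/2)%R) (F (- (1/2))%R) = R0 by rewrite E in HI.
rewrite /minus /plus /opp /= /F.
have -> : (K * (2 * PI * (1/2)) = K * PI)%R by field.
have -> : (K * (2 * PI * - (1/2)) = - (K * PI))%R by field.
rewrite sin_neg cos_neg.
have [z Ez] := int_to_R_IZR k.
rewrite (sin_eq_0_1 (K * PI)); last by exists z; rewrite -Ez.
rewrite /Hierarchy.opp /=. field; split; [lra|]; done.
Qed.

Lemma is_RInt_sum (T : Type) (r : seq T) (P : pred T) (c : T -> CC) (k : T -> int) :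
  is_RInt (fun s => Re (\sum_(t <- r | P t) c t * (cis (Rmult (Rmult 2 PI) s) : CC)^(k t))%ring)
    (- (1/2))%R (1/2)%R (Re (\sum_(t <- r | P t && (k t == 0)) c t)%ring).
Proof.
elim: r => [|t r IH].
  rewrite big_nil. apply: (is_RInt_ext (fun _ => R0)) => [x _|]; first by rewrite big_nil.
  have H0 := is_RInt_const (- (1/2))%R (1/2)%R R0.
  rewrite /scal /= /mult /= Rmult_0_r in H0. exact: H0.
rewrite big_cons; case Pt: (P t) => /=; last first.
  by apply: (is_RInt_ext _ _ _ _ _ _ IH) => x _; rewrite big_cons Pt.
apply: (is_RInt_ext (fun x => Rplus (Re ((c t * (cis (Rmult (Rmult 2 PI) x) : CC)^(k t))%ring))
   (Re (\sum_(t <- r | P t) c t * (cis (Rmult (Rmult 2 PI) x) : CC)^(k t))%ring))).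
  by move=> x _; rewrite big_cons Pt.
have := is_RInt_plus _ _ _ _ _ _ (@is_RInt_term (c t) (k t)) IH.
case: (k t == 0) => /=; first by [].
by rewrite /plus /= Rplus_0_l.
Qed.

Lemma iint_trig n (T : finType) (c : T -> CC) (e : T -> nat -> int) :
  iint n (fun th => Re (\sum_(t : T) c t * mono n (e t) th)%ring) =
  Re (\sum_(t | all (fun i => e t i == 0) (iota 0 n)) c t)%ring.
Proof.
elim: n c => [|n IH] c /=.
  by rewrite /mono; under eq_bigr do rewrite big_ord0 mulr1.
set G := fun t0 => (\sum_(t | all (fun i => e t i == 0) (iota 0 n))
           (c t * (cis (Rmult (Rmult 2 PI) t0) : CC)^(e t n)))%ring.
transitivity (RInt (fun t0 => Re (G t0)) (- (1/2))%R (1/2)%R).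
  congr RInt; apply: functional_extensionality => t0.
  rewrite /G -(IH (fun t => c t * (cis (Rmult (Rmult 2 PI) t0) : CC)^(e t n))).
  congr iint; apply: functional_extensionality => x; congr Re.
  apply: eq_bigr => t _; rewrite /mono big_ord_recr /= Nat.eqb_refl.
  have E : forall (u v w v' : CC), v = v' -> u * (v * w) = u * w * v'.
    by move=> u v w v' ->; rewrite mulrA mulrAC.
  apply: E.
  apply: eq_bigr => i _.
  have -> : Nat.eqb i n = false by apply/Nat.eqb_neq => h; move: (ltn_ord i); rewrite h ltnn.
  by [].
rewrite /G; apply: is_RInt_unique.
have -> : (\sum_(t | all (fun i => e t i == 0) (iota 0 n.+1)) c t)%ring =
          (\sum_(t | all (fun i => e t i == 0) (iota 0 n) && (e t n == 0)) c t)%ring.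
  apply: eq_bigl => t; by rewrite -addn1 iotaD all_cat /= andbT.
exact: (@is_RInt_sum T (index_enum T) (fun t => all (fun i => e t i == 0) (iota 0 n)) c (fun t => e t n)).
Qed.

Definition Jm : CC := (0%R, (-1)%R).
Lemma ImRe (z : CC) : Im z = Re (z * Jm)%ring.
Proof. rewrite mulCE /Jm /Cmult /Im /=; ring. Qed.

Lemma iint_trig_Im n (T : finType) (c : T -> CC) (e : T -> nat -> int) :
  iint n (fun th => Im (\sum_(t : T) c t * mono n (e t) th)%ring) =
  Im (\sum_(t | all (fun i => e t i == 0) (iota 0 n)) c t)%ring.
Proof.
rewrite ImRe mulr_suml -(iint_trig n (fun t => c t * Jm)).
congr iint; apply: functional_extensionality => th.
rewrite ImRe mulr_suml; congr Re; apply: eq_bigr => t _; by rewrite mulrAC.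
Qed.

Local Open Scope ring_scope.

Section Comb.
Variables (N a b lam : nat).

Definition Sk (f : family N lam) (k : 'I_N) : int := \sum_(l < N | l != k) Ival f k l.
Definition expo (f : family N lam) (j : {ffun 'I_N -> 'I_(a + b).+1}) (k : 'I_N) : int :=
  a%:Z - (j k)%:Z + Sk f k.
Definition Af (f : family N lam) : int :=
  (-1) ^ (\sum_(p : pairs N) Ipair f p) * \prod_(p : pairs N) binZ (2 * lam) (lam%:Z + Ipair f p).
Definition coef (f : family N lam) (j : {ffun 'I_N -> 'I_(a + b).+1}) : int :=
  Af f * \prod_(k < N) ('C(a + b, j k))%:Z.
Definition ee (t : family N lam * {ffun 'I_N -> 'I_(a + b).+1}) (i : nat) : int :=
  if (insub i : option 'I_N) is Some k then expo t.1 t.2 k else 0.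

Lemma all_ee t : all (fun i => ee t i == 0) (iota 0 N) = [forall k : 'I_N, expo t.1 t.2 k == 0].
Proof.
apply/allP/forallP => [H k|H i].
  by have := H k; rewrite mem_iota /= ltn_ord /ee valK => /(_ isT).
rewrite mem_iota /= => Hi; rewrite /ee insubT; exact: H.
Qed.

Lemma sum_ffun_forall (I J : finType) (Q : I -> pred J) (G : I -> J -> int) :
  \sum_(j : {ffun I -> J} | [forall k, Q k (j k)]) \prod_k G k (j k) =
  \prod_k \sum_(x | Q k x) G k x.
Proof.
under [RHS]eq_bigr do rewrite big_mkcond.
rewrite bigA_distr_bigA big_mkcond; apply: eq_bigr => j _.
case: (boolP [forall k, Q k (j k)]) => [/forallP H|].
  by apply: eq_bigr => k _; rewrite H.
rewrite negb_forall => /existsP [k /negbTE Hk]. by rewrite (bigD1 k) //= Hk mul0r.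
Qed.

Lemma sum_binom (m : int) :
  \sum_(x < (a + b).+1 | a%:Z - x%:Z + m == 0) ('C(a + b, x))%:Z = binZ (a + b) (a%:Z + m).
Proof.
have E : forall x : nat, (a%:Z - x%:Z + m == 0) = (x%:Z == a%:Z + m).
  by move=> x; rewrite addrAC subr_eq0 eq_sym.
under eq_bigl do rewrite E.
rewrite -(big_mkord (fun x : nat => x%:Z == a%:Z + m) (fun x => ('C(a + b, x))%:Z)).
case: (a%:Z + m) => [n|n] /=.
  under eq_bigl do rewrite eqz_nat.
  rewrite big_nat1_eq; case: ifP => //= /negbT; rewrite ltnS -ltnNge => H.
  by rewrite bin_small.
by rewrite big_pred0.
Qed.

Lemma stepC :
  \sum_(t | all (fun i => ee t i == 0) (iota 0 N)) coef t.1 t.2 = Msum N a b lam.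
Proof.
under eq_bigl do rewrite all_ee.
rewrite -(pair_big_dep xpredT (fun f j => [forall k : 'I_N, expo f j k == 0]) (fun f j => coef f j)) /=.
apply: eq_bigr => f _.
rewrite /coef -big_distrr /=; congr (_ * _).
have -> := @sum_ffun_forall _ _ (fun k (x : 'I_(a+b).+1) => a%:Z - x%:Z + Sk f k == 0)
   (fun k (x : 'I_(a+b).+1) => ('C(a+b,x))%:Z).
by apply: eq_bigr => k _; rewrite sum_binom.
Qed.
End Comb.

Local Open Scope ring_scope.

Lemma Cprod_big s f : Cprod s f = \prod_(i <- s) (f i : CC).
Proof. elim: s => [|x s IH] /=; [by rewrite big_nil | by rewrite big_cons IH]. Qed.

Lemma RtoC_exp (x : R) n : RtoC (pow x n) = (RtoC x : CC) ^+ n.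
Proof.
elim: n => [|n IH]; first by [].
by rewrite exprS -IH mulCE -RtoC_mult.
Qed.

Lemma Cmod_cis x : Cmod (cis x) = R1.
Proof.
rewrite /Cmod /cis /=.
have -> : (cos x ^ 2 + sin x ^ 2)%R = R1 by rewrite -!Rsqr_pow2 Rplus_comm sin2_cos2.
exact: sqrt_1.
Qed.

Lemma A1 (th : R) (a b : nat) : (- (1/2) < th < 1/2)%R ->
  Cmult (cis (Rmult (Rmult PI th) (Rminus (INR a) (INR b))))
        (RtoC (pow (Cmod (Cplus (RtoC 1) (cis (Rmult (Rmult 2 PI) th)))) (a + b)))
  = ((cis (Rmult (Rmult 2 PI) th) : CC) + 1) ^+ (a + b) * (cis (Rmult (Rmult 2 PI) th) : CC) ^- b.
Proof.
move=> Hth; set x := (PI * th)%R.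
have HP := PI_RGT_0.
have Hc : (0 <= cos x)%R.
  apply: cos_ge_0; rewrite /x; nra.
have E1 : ((cis (Rmult (Rmult 2 PI) th) : CC) + 1) = (cis x : CC) * RtoC (2 * cos x)%R.
  rewrite addCE mulCE /cis /Cplus /Cmult /=.
  have -> : (2 * PI * th = 2 * x)%R by rewrite /x; ring.
  rewrite cos_2a_cos sin_2a; apply: injective_projections => /=; ring.
have E2 : Cmod (Cplus (RtoC 1) (cis (Rmult (Rmult 2 PI) th))) = (2 * cos x)%R.
  rewrite Cplus_comm -addCE E1 mulCE Cmod_mult Cmod_cis Cmod_R Rabs_pos_eq; lra.
rewrite E2 RtoC_exp E1 exprMn -mulCE mulrAC.
have H : forall u v w : CC, u = v -> u * w = v * w by move=> ? ? ? ->.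
apply: H.
rewrite !cisn -cisN -cis_add; congr cis.
rewrite /x plus_INR; ring.
Qed.

Lemma eqCC (x y : CC) : @eq CC x y -> @eq C x y. Proof. by []. Qed.
Lemma mulC_congr_l (u v w : CC) : u = v -> u * w = v * w. Proof. by move->. Qed.
Lemma mulC_congr_r (u v w : CC) : u = v -> w * u = w * v. Proof. by move->. Qed.

Lemma exp_nat_neg (z : CC) (m n : nat) (k : int) : z != 0 -> m%:Z - n%:Z = k -> z ^+ m * z ^- n = z ^ k.
Proof. by move=> z0 <-; rewrite exprnP exprnN -expfzDr. Qed.

Lemma A1sum (z : CC) (a b : nat) : z != 0 ->
  (z + 1) ^+ (a + b) * z ^- b = \sum_(i < (a + b).+1) (('C(a + b, i))%:Z)%:~R * z ^ (a%:Z - i%:Z).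
Proof.
move=> z0; rewrite exprDn mulr_suml; apply: eq_bigr => i _.
rewrite expr1n mulr1 -mulr_natl -mulrA; apply: mulC_congr_r.
apply: exp_nat_neg => //.
have Hi := ltn_ord i.
lia.
Qed.

Lemma sign_par (lam i : nat) : (i <= 2 * lam)%N ->
  (-1) ^+ lam * (-1) ^+ (2 * lam - i)%N = (-1) ^+ `|i%:Z - lam%:Z|%N :> CC.
Proof.
move=> h; rewrite -exprD.
have [c ->] : exists c, (lam + (2 * lam - i) = `|i%:Z - lam%:Z| + 2 * c)%N.
  exists (if (i <= lam)%N then lam else (2*lam - i)%N); case: leqP => h2; lia.
by rewrite exprD exprM sqrrN expr1n expr1n mulr1.
Qed.

Lemma cis_conj x : Cconj (cis x) = (cis x : CC)^-1.
Proof.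
rewrite -cisN /Cconj /cis /= cos_neg sin_neg //.
Qed.

Lemma A2 (al be : R) (lam : nat) :
  RtoC (pow (Cmod (Cminus (cis al) (cis be))) (2 * lam)%N) =
  \sum_(i < 2 * lam + 1)
     (((-1) ^ (i%:Z - lam%:Z) * binZ (2 * lam) (lam%:Z + (i%:Z - lam%:Z))) : int)%:~R
      * (cis al : CC) ^ (i%:Z - lam%:Z) * (cis be : CC) ^ (- (i%:Z - lam%:Z)).
Proof.
set u := (cis al : CC); set v := (cis be : CC).
have u0 : u != 0 by apply: cis_neq0.
have v0 : v != 0 by apply: cis_neq0.
have -> : pow (Cmod (Cminus u v)) (2 * lam)%N = pow (pow (Cmod (Cminus u v)) 2) lam.
  by rewrite -pow_mult.
rewrite RtoC_exp Cmod2_conj Cminus_conj !cis_conj -/u -/v.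
have -> : Cmult (Cminus u v) (Cminus u^-1 v^-1) = - (u - v) ^+ 2 * (u^-1 * v^-1) :> CC.
  rewrite -mulCE; change (Cminus u v) with (u - v); change (Cminus u^-1 v^-1) with (u^-1 - v^-1).
  by mcfield; rewrite v0 u0.
have E : (2 * lam + 1)%N = (2 * lam)%N.+1 :> nat by lia.
rewrite E.
have H1 : (- (u - v) ^+ 2) ^+ lam = (-1) ^+ lam * (u - v) ^+ (2 * lam)%N.
  by rewrite -(mulN1r ((u - v) ^+ 2)) exprMn -exprM.
rewrite exprMn H1 exprMn !exprVn (addrC u) exprDn.
rewrite mulr_sumr mulr_suml; apply: eq_bigr => i _.
have Hi : (i <= 2 * lam)%N by rewrite -ltnS.
rewrite exprNn intrM expN1r intr_sign.
have -> : lam%:Z + (i%:Z - lam%:Z) = i%:Z by rewrite addrC subrK.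
have -> : (binZ (2 * lam) i)%:~R = ('C(2 * lam, i))%:R :> CC by [].
rewrite -(sign_par Hi) -(@exp_nat_neg u i lam (i%:Z - lam%:Z) u0 (erefl _)).
rewrite -(@exp_nat_neg v (2 * lam - i)%N lam (- (i%:Z - lam%:Z)) v0); last by lia.
rewrite expr1n mulr1 (exprNn v) -mulr_natl.
apply: eqCC; mcring.
Qed.

Lemma prod_pairs N (F : 'I_N -> 'I_N -> CC) :
  \prod_(p : pairs N) F (val p).1 (val p).2 = \prod_(k < N) \prod_(l < N | (k < l)%N) F k l.
Proof.
rewrite pair_big_dep /=.
rewrite [RHS](reindex_omap (val : pairs N -> 'I_N * 'I_N) insub) /=.
  by apply: eq_bigl => p; rewrite valK eqxx andbT (valP p).
by move=> kl h; rewrite insubT.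
Qed.

Lemma Ival_lt N lam (f : family N lam) (p : pairs N) : Ival f (val p).1 (val p).2 = Ipair f p.
Proof.
case: p => [[k l] h] /=; rewrite /Ival insubT /=.
by congr Ipair; apply: val_inj.
Qed.

Lemma Ival_gt N lam (f : family N lam) (k l : 'I_N) : (l < k)%N -> Ival f k l = - Ival f l k.
Proof.
move=> h; rewrite /Ival insubF /=; last by rewrite ltnNge ltnW.
by rewrite insubT.
Qed.

Lemma KMI N lam (f : family N lam) (z : 'I_N -> CC) : (forall k, z k != 0) ->
  \prod_(k < N) z k ^ (Sk f k) =
  \prod_(p : pairs N) (z (val p).1 ^ (Ipair f p) * z (val p).2 ^ (- Ipair f p)).
Proof.
move=> Hz.
have Hm : forall k, z k ^ (Sk f k) = \prod_(l < N | l != k) z k ^ (Ival f k l).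
  move=> k; rewrite /Sk.
  exact: (big_morph (fun e => z k ^ e) (fun m n => @expfzDr _ (z k) m n (Hz k)) (expr0z _)).
under eq_bigr do rewrite Hm.
have Hs : forall k, \prod_(l < N | l != k) z k ^ (Ival f k l) =
     \prod_(l < N | (k < l)%N) z k ^ (Ival f k l) * \prod_(l < N | (l < k)%N) z k ^ (Ival f k l).
  move=> k; rewrite (bigID (fun l : 'I_N => (k < l)%N)) /=.
  by congr (_ * _); apply: eq_bigl => l; rewrite -(inj_eq val_inj) /=; case: (ltngtP l k).
under eq_bigr do rewrite Hs.
rewrite big_split big_split /=; congr (_ * _).
  rewrite -(prod_pairs (fun k l => z k ^ (Ival f k l))).
  by apply: eq_bigr => p _; rewrite Ival_lt.
rewrite (exchange_big_dep xpredT) //=.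
transitivity (\prod_(l < N) \prod_(k < N | (l < k)%N) z k ^ (- Ival f l k)).
  apply: eq_bigr => l _; apply: eq_big => // k h.
  by rewrite (Ival_gt f h).
rewrite -(prod_pairs (fun l k => z k ^ (- Ival f l k))).
by apply: eq_bigr => p _; rewrite Ival_lt.
Qed.

Lemma big_iota_ord (F : nat -> CC) N : \prod_(i <- iota 0 N) F i = \prod_(i < N) F i.
Proof. by rewrite -(big_mkord xpredT) /index_iota subn0. Qed.

Lemma sign_prod N lam (f : family N lam) :
  \prod_(p : pairs N) ((-1) ^ (Ipair f p) * binZ (2 * lam) (lam%:Z + Ipair f p)) = Af f.
Proof.
rewrite big_split /Af; congr (_ * _).
symmetry; apply: (big_morph (fun e => (-1 : int) ^ e)).
  by move=> m n; rewrite exprzDr // unitrN1.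
by [].
Qed.

Section StepA.
Variables (N a b lam : nat) (th : nat -> R).
Hypothesis Hth : forall i, (i < N)%N -> (- (1/2) < th i < 1/2)%R.
Let z (k : nat) : CC := cis (Rmult (Rmult 2 PI) (th k)).
Let z0 k : z k != 0. Proof. exact: cis_neq0. Qed.

Lemma P1E : Cprod (iota 0 N) (fun l =>
       Cmult (cis (Rmult (Rmult PI (th l)) (Rminus (INR a) (INR b))))
             (RtoC (pow (Cmod (Cplus (RtoC 1) (cis (Rmult (Rmult 2 PI) (th l))))) (a + b))))
  = \sum_(j : {ffun 'I_N -> 'I_(a + b).+1}) \prod_(k < N) ((('C(a + b, j k))%:Z)%:~R * z k ^ (a%:Z - (j k)%:Z)).
Proof.
rewrite Cprod_big big_iota_ord.
under eq_bigr => k _.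
  rewrite A1; last by apply: Hth.
  rewrite A1sum; last exact: cis_neq0.
  over.
by rewrite bigA_distr_bigA.
Qed.

Lemma P2E : Cprod (iota 0 N) (fun k =>
       Cprod (iota k.+1 (N - k.+1)) (fun l =>
         RtoC (pow (Cmod (Cminus (cis (Rmult (Rmult 2 PI) (th k)))
                                 (cis (Rmult (Rmult 2 PI) (th l))))) (2 * lam)%N)))
  = \sum_(f : family N lam) \prod_(p : pairs N)
      ((((-1) ^ (Ipair f p) * binZ (2 * lam) (lam%:Z + Ipair f p)) : int)%:~R
        * z (val p).1 ^ (Ipair f p) * z (val p).2 ^ (- Ipair f p)).
Proof.
rewrite Cprod_big big_iota_ord.
under eq_bigr do rewrite Cprod_big -[iota _ _]/(index_iota _ N) big_geq_mkord.
under eq_bigr do under eq_bigr do rewrite A2.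
pose G (k l : 'I_N) (i : nat) : CC := (((-1) ^ (i%:Z - lam%:Z) * binZ (2 * lam) (lam%:Z + (i%:Z - lam%:Z))) : int)%:~R
      * z k ^ (i%:Z - lam%:Z) * z l ^ (- (i%:Z - lam%:Z)).
transitivity (\prod_(p : pairs N) \sum_(i < 2 * lam + 1) G (val p).1 (val p).2 i).
  rewrite (prod_pairs (fun k l => \sum_(i < 2 * lam + 1) G k l i)).
  by apply: eq_bigr => k _; apply: eq_bigl => l.
rewrite bigA_distr_bigA; apply: eq_bigr => f _; apply: eq_bigr => p _.
by [].
Qed.

Lemma monoE (f : family N lam) (j : {ffun 'I_N -> 'I_(a + b).+1}) :
  mono N (@ee N a b lam (f, j)) th =
  \prod_(k < N) z k ^ (a%:Z - (j k)%:Z) *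
  \prod_(p : pairs N) (z (val p).1 ^ (Ipair f p) * z (val p).2 ^ (- Ipair f p)).
Proof.
rewrite -(@KMI N lam f (fun k : 'I_N => z k)); last by move=> k; apply: z0.
rewrite /mono -big_split /=; apply: eq_bigr => k _.
by rewrite /ee valK /= /expo expfzDr //; apply: z0.
Qed.

Lemma stepA : integrand N a b lam th =
  \sum_(t : family N lam * {ffun 'I_N -> 'I_(a + b).+1})
     ((@coef N a b lam t.1 t.2)%:~R : CC) * mono N (@ee N a b lam t) th.
Proof.
rewrite /integrand -mulCE P1E P2E.
rewrite mulr_suml; under eq_bigr do rewrite mulr_sumr.
rewrite exchange_big pair_bigA /=.
apply: eq_bigr => -[f j] _ /=.
rewrite monoE /coef intrM -sign_prod !rmorph_prod !big_split /=.
apply: eqCC; mcring.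
Qed.

End StepA.

Local Open Scope ring_scope.

Lemma natCE (n : nat) : (n%:R : CC) = RtoC (INR n).
Proof.
elim: n => [|n IH]; first by [].
by rewrite mulrSr IH S_INR addCE -RtoC_plus.
Qed.

Lemma intCE (z : int) : (z%:~R : CC) = RtoC (int_to_R z).
Proof.
case: z => n; first by rewrite -pmulrn natCE.
by rewrite NegzE mulrNz -pmulrn natCE oppCE RtoC_opp.
Qed.

Theorem proposition4 (a b lam N : nat) :
  MN N a b lam = RtoC (int_to_R (Msum N a b lam)).
Proof.
have E : forall th, (forall i, (i < N)%N -> (- (1/2) < th i < 1/2)%R) ->
   integrand N a b lam th = \sum_(t : family N lam * {ffun 'I_N -> 'I_(a + b).+1})
     ((@coef N a b lam t.1 t.2)%:~R : CC) * mono N (@ee N a b lam t) th.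
  by move=> th Hth; apply: stepA.
rewrite /MN (@iint_ext N _ (fun th => Re (\sum_(t : family N lam * {ffun 'I_N -> 'I_(a + b).+1})
     ((@coef N a b lam t.1 t.2)%:~R : CC) * mono N (@ee N a b lam t) th)%ring)); last first.
  by move=> th Hth; rewrite E.
rewrite (@iint_ext N (fun th => Im (integrand N a b lam th)) (fun th => Im (\sum_(t : family N lam * {ffun 'I_N -> 'I_(a + b).+1})
     ((@coef N a b lam t.1 t.2)%:~R : CC) * mono N (@ee N a b lam t) th)%ring)); last first.
  by move=> th Hth; rewrite E.
rewrite iint_trig iint_trig_Im -rmorph_sum stepC.
set m := Msum N a b lam.
change ((Re ((m%:~R : CC)), Im ((m%:~R : CC))) = RtoC (int_to_R m)).
by rewrite intCE.
Qed.
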